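(* For every integer $c\ge 3$ and every instance with two groups of binary agents, there exists an allocation that is 1-out-of-$c$ MMS-fair for at least a $1-1/2^{c-1}$ fraction of the agents in each group.
   Context: There is a finite set $G$ of goods and two groups $A_1,A_2$ of agents, $n_i\ge1$ agents in $A_i$. A binary agent has an additive utility with $u_a(\{g\})\in\{0,1\}$. An allocation is a partition $(G_1,G_2)$ of $G$; agents of $A_i$ get $u_a(G_i)$. For an integer $c$, $\mathrm{MMS}^c_a(G)$ is the maximum, over partitions of $G$ into $c$ sets, of the minimum of $u_a$ over the sets. The allocation is 1-out-of-$c$ MMS-fair for $a\in A_i$ if $u_a(G_i)\ge \mathrm{MMS}^c_a(G)$; for a binary agent desiring $r$ goods this means $G_i$ contains at least $\lfloor r/c\rfloor$ goods she desires. *)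

(* Defs.v *)
From mathcomp Require Import all_boot.
Set Implicit Arguments. Unset Strict Implicit. Unset Printing Implicit Defensive.

Definition util (G : finType) (u : G -> nat) (S : {set G}) : nat :=
  \sum_(g in S) u g.

Definition binary (G : finType) (u : G -> nat) : Prop := forall g, u g <= 1.

(* A partition of G into c (possibly empty) sets is a map f : G -> 'I_c;
   bundle j is [set g | f g == j]. The minimum over the c bundles is taken
   with neutral element u(G), which bounds every bundle value. *)
Definition min_bundle (G : finType) (c : nat) (u : G -> nat)
  (f : {ffun G -> 'I_c}) : nat :=
  \big[minn/util u [set: G]]_(j < c) util u [set g | f g == j].

Definition mms (G : finType) (c : nat) (u : G -> nat) : nat :=
  \max_(f : {ffun G -> 'I_c}) min_bundle u f.

Definition mms_fair (G : finType) (c : nat) (u : G -> nat) (S : {set G}) : bool :=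
  mms c u <= util u S.

(* Main.v *)
Require Import Defs.
From mathcomp Require Import all_boot zify.

Fixpoint T (r j : nat) : nat :=
  match r with 0 => (0 < j) | r'.+1 => T r' j + T r' j.-1 end.

Lemma T0 r : T r 0 = 0.
Proof. by elim: r => //= r ->. Qed.

Lemma TS r j : T r j.+1 = T r j + 'C(r, j).
Proof.
elim: r j => [|r IH] [|j] //=; rewrite ?T0 //.
  by rewrite IH T0 bin0.
by rewrite !IH binS; lia.
Qed.

Lemma Tmono r j : T r j.-1 <= T r j.
Proof. by case: j => [|j] //=; rewrite TS leq_addr. Qed.

Lemma Tr k s j : T (k + s) j <= 2 ^ k * T s j.
Proof.
elim: k j => [|k IH] j; first by rewrite mul1n.
rewrite addSn /= expnS.
have := IH j; have := IH j.-1; have := Tmono s j; nia.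
Qed.

Lemma TU c r j : T (c + r) j.+1 <= T r j.+1 + c * T r j + (2 ^ c - 1 - c) * T r j.-1.
Proof.
elim: c j => [|c IH] j; first by rewrite /= add0n; lia.
rewrite addSn /=.
have H1 := IH j.
have H2 : T (c + r) j <= T r j + (2 ^ c - 1) * T r j.-1.
  case: j {H1} => [|j]; first by rewrite !T0.
  have := IH j; have := Tmono r j; have := ltn_expl c (ltnSn 1); simpl; nia.
have := ltn_expl c (ltnSn 1); rewrite expnS; have := Tmono r j; nia.
Qed.

Lemma pow_ge {c} : 3 <= c -> (2 * c).+1 <= 2 ^ c.
Proof.
elim: c => [|c IH] //; rewrite leq_eqVlt => /orP [/eqP <- //| Hc].
rewrite expnS; have := IH Hc; lia.
Qed.

Lemma Tkey c m : 3 <= c -> T (c + c * m.+1) m.+2 <= 2 ^ c * T (c * m.+1) m.+1.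
Proof.
move=> Hc; have H := TU c (c * m.+1) m.+1.
have HP := pow_ge Hc.
rewrite !TS in H *.
have Hb : m.+1 * 'C(c * m.+1, m.+1) = (c * m.+1 - m) * 'C(c * m.+1, m) by rewrite mul_bin_left.
have He : 'C(c * m.+1, m.+1) <= c * 'C(c * m.+1, m).
  rewrite -(leq_pmul2l (ltn0Sn m)) Hb mulnA.
  apply: leq_mul => //; rewrite mulnC; exact: leq_subr.
simpl in H; nia.
Qed.

Lemma Tcm c m : 3 <= c -> 2 ^ c * T (c * m.+1) m.+1 <= 2 ^ (c * m.+1).
Proof.
move=> Hc; elim: m => [|m IH].
  rewrite muln1; suff -> : T c 1 = 1 by rewrite muln1.
  by elim: c {Hc} => //= c ->; rewrite T0.
rewrite mulnS expnD; apply: leq_trans (leq_mul (leqnn _) IH).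
by rewrite leq_mul2l Tkey ?orbT.
Qed.

Lemma Tbound c r : 3 <= c -> 2 ^ c * T r (r %/ c) <= 2 ^ r.
Proof.
move=> Hc; case Em : (r %/ c) => [|m]; first by rewrite T0 muln0.
have Hr : r = r %% c + c * m.+1 by rewrite {1}(divn_eq r c) Em mulnC addnC.
rewrite {2}Hr expnD; rewrite {1}Hr.
apply: leq_trans (leq_mul (leqnn _) (Tr _ _ _)) _.
rewrite mulnCA leq_mul2l Tcm ?orbT //.
Qed.

Lemma ltS_pred k j : (k.+1 < j) = (k < j.-1).
Proof. by case: j. Qed.

Lemma count_split (G : finType) (D : {set G}) n : forall (A : {set G}) j, #|A| <= n ->
  \sum_(S : {set G} | S \subset A) (#|S :&: D| < j) = 2 ^ #|A :\: D| * T #|A :&: D| j.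
Proof.
elim: n => [|n IH] A j HA.
  move: HA; rewrite leqn0 cards_eq0 => /eqP E; subst A.
  rewrite (eq_bigl (pred1 set0)); last by move=> S; rewrite subset0.
  by rewrite big_pred1_eq set0I set0D cards0 mul1n.
case: (set_0Vmem A) => [->|[x xA]].
  rewrite (eq_bigl (pred1 set0)); last by move=> S; rewrite subset0.
  by rewrite big_pred1_eq set0I set0D cards0 mul1n.
have HA' : #|A :\ x| <= n by move: HA; rewrite (cardsD1 x A) xA.
rewrite (bigID (fun S : {set G} => x \in S)) /=.
rewrite [X in _ + X](eq_bigl (fun S : {set G} => S \subset A :\ x)); last first.
  by move=> S; rewrite subsetD1.
rewrite [X in X + _](reindex_onto (fun S => x |: S) (fun S => S :\ x)); last first.
  by move=> S /andP [_ xS]; rewrite setD1K.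
rewrite [X in X + _](eq_bigl (fun S : {set G} => S \subset A :\ x)); last first.
  move=> S; rewrite subsetD1 subUset sub1set xA setU11 /= andbT.
  case: (boolP (x \in S)) => xS /=.
    rewrite andbF; apply/negbTE; apply/negP => /andP [_ /eqP E]; move: xS; rewrite -E.
    by rewrite !inE eqxx.
  by rewrite setU1K // eqxx !andbT.
have EAD : A :\: D = (A :\ x) :\: D :|: (if x \in D then set0 else [set x]).
  apply/setP => y; rewrite !inE; case: (eqVneq y x) => [->|ne]; case xD: (x \in D);
  rewrite ?inE ?xA ?xD ?eqxx ?(negbTE ne) /= ?orbF //.
have EAI : A :&: D = (A :\ x) :&: D :|: (if x \in D then [set x] else set0).
  apply/setP => y; rewrite !inE; case: (eqVneq y x) => [->|ne]; case xD: (x \in D);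
  rewrite ?inE ?xA ?xD ?eqxx ?(negbTE ne) /= ?orbF ?andbT //.
case xD : (x \in D).
  rewrite [X in X + _](_ : _ = \sum_(S : {set G} | S \subset A :\ x) (#|S :&: D| < j.-1)); last first.
    apply: eq_bigr.
    move=> S; rewrite subsetD1 => /andP [_ xS].
    rewrite setIUl (setIidPl _); last by rewrite sub1set xD.
    by rewrite cardsU1 inE (negbTE xS) /= -ltS_pred.
  rewrite !IH // EAD EAI xD setU0 setUC cardsU1 !inE eqxx /=.
  by rewrite add0n mulnDr addnC.
rewrite [X in X + _](_ : _ = \sum_(S : {set G} | S \subset A :\ x) (#|S :&: D| < j)); last first.
  apply: eq_bigr => S _.
  rewrite setIUl (_ : [set x] :&: D = set0) ?set0U //.
  by apply/setP => y; rewrite !inE; case: (eqVneq y x) => [->|]; rewrite ?xD ?andbF.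
rewrite !IH // EAD EAI xD setU0 setUC cardsU1 !inE eqxx /=.
by rewrite andbF /= add1n expnS mul2n -addnn mulnDl.
Qed.

Lemma min_bound c (x : nat) (F : 'I_c -> nat) :
  c * \big[minn/x]_(j < c) F j <= \sum_(j < c) F j.
Proof.
elim: c F => [|c IH] F; first by rewrite mul0n.
rewrite mulSn !big_ord_recl /=.
apply: leq_add; first by rewrite geq_minl.
apply: leq_trans _ (IH _); rewrite leq_mul2l geq_minr orbT //.
Qed.

Lemma mms_le (G : finType) c (u : G -> nat) : 0 < c -> c * mms c u <= util u setT.
Proof.
move=> c0; rewrite mulnC -leq_divRL //; apply/bigmax_leqP => f _.
rewrite leq_divRL // mulnC /min_bundle.
apply: leq_trans (min_bound _ _ _) _.
rewrite /util (partition_big f (fun _ => true)) //=.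
apply: leq_sum => j _; rewrite big_mkcond [X in _ <= X]big_mkcond /=.
apply: leq_sum => g _; rewrite !inE.
by case: (f g == j).
Qed.

Lemma util_D (G : finType) (u : G -> nat) S : binary u ->
  util u S = #|S :&: [set g | u g == 1]|.
Proof.
move=> bu; rewrite /util (big_setID [set g | u g == 1]) /=.
rewrite [X in _ + X]big1 ?addn0; last first.
  move=> g; rewrite !inE => /andP [H _]; move: (bu g) H.
  by case: (u g) => [|[|]].
rewrite -sum1_card; apply: eq_bigr => g; rewrite !inE => /andP [_ /eqP //].
Qed.

Lemma fail_cond (G : finType) c (u : G -> nat) S : 0 < c -> binary u ->
  ~~ mms_fair c u S ->
  #|S :&: [set g | u g == 1]| < #|[set g | u g == 1]| %/ c.
Proof.
move=> c0 bu; rewrite /mms_fair -ltnNge => H.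
rewrite leq_divRL // mulnC.
have := @mms_le G c u c0; rewrite !util_D // setTI -(@util_D G u S bu).
move: H; rewrite -(leq_pmul2l c0) => H1 H2.
exact: leq_trans H1 H2.
Qed.

Lemma agent_bound (G : finType) c (u : G -> nat) : 3 <= c -> binary u ->
  2 ^ c * \sum_(S : {set G}) (~~ mms_fair c u S) <= 2 ^ #|G|.
Proof.
move=> c3 bu; have c0 : 0 < c by apply: leq_trans c3.
set D := [set g | u g == 1].
have -> : 2 ^ #|G| = 2 ^ #|~: D| * 2 ^ #|D| by rewrite -expnD addnC cardsC.
apply: leq_trans (_ : 2 ^ c * (2 ^ #|~: D| * T #|D| (#|D| %/ c)) <= _).
  rewrite leq_mul2l; apply/orP; right.
  have E := @count_split G D _ setT (#|D| %/ c) (leqnn _); rewrite setTD setTI in E; rewrite -E.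
  rewrite [X in _ <= X](eq_bigl predT); last by move=> S; rewrite subsetT.
  apply: leq_sum => S _; case Hf: (mms_fair c u S) => //=.
  by rewrite lt0b; apply: fail_cond; rewrite ?Hf.
by rewrite mulnCA leq_mul2l Tbound ?orbT.
Qed.

Lemma agent_boundC (G : finType) c (u : G -> nat) : 3 <= c -> binary u ->
  2 ^ c * \sum_(S : {set G}) (~~ mms_fair c u (~: S)) <= 2 ^ #|G|.
Proof.
move=> c3 bu.
have -> : \sum_(S : {set G}) (~~ mms_fair c u (~: S) : nat) = \sum_(S : {set G}) (~~ mms_fair c u S : nat).
  by rewrite [RHS](reindex_inj (@setC_inj G)).
exact: agent_bound.
Qed.

Lemma card_fair n (P : 'I_n -> bool) :
  #|[set a | P a]| + \sum_(a < n) (~~ P a) = n.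
Proof.
have := cardsC [set a | P a]; rewrite card_ord => E; rewrite -[RHS]E; congr (_ + _).
rewrite -sum1_card [RHS]big_mkcond /=; apply: eq_bigr => a _; rewrite !inE.
by case: (P a).
Qed.

Theorem mainTheorem8 (G : finType) (c n1 n2 : nat)
  (u1 : 'I_n1 -> G -> nat) (u2 : 'I_n2 -> G -> nat) :
  3 <= c -> 1 <= n1 -> 1 <= n2 ->
  (forall a, binary (u1 a)) -> (forall a, binary (u2 a)) ->
  exists G1 : {set G},
    (2 ^ c.-1 - 1) * n1 <= 2 ^ c.-1 * #|[set a | mms_fair c (u1 a) G1]|
    /\ (2 ^ c.-1 - 1) * n2 <= 2 ^ c.-1 * #|[set a | mms_fair c (u2 a) (~: G1)]|.
Proof.
move=> c3 n10 n20 b1 b2.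
pose f1 S := \sum_(a < n1) (~~ mms_fair c (u1 a) S : nat).
pose f2 S := \sum_(a < n2) (~~ mms_fair c (u2 a) (~: S) : nat).
have [S HS] : exists S : {set G}, 2 ^ c * (n2 * f1 S + n1 * f2 S) <= 2 * n1 * n2.
  case: (pickP (fun S : {set G} => 2 ^ c * (n2 * f1 S + n1 * f2 S) <= 2 * n1 * n2)) => [S HS|H]; first by exists S.
  exfalso.
  have H1 : \sum_(S : {set G}) (2 * n1 * n2).+1 <= \sum_(S : {set G}) 2 ^ c * (n2 * f1 S + n1 * f2 S).
    by apply: leq_sum => S _; rewrite ltnNge H.
  move: H1; rewrite sum_nat_const -big_distrr big_split -!big_distrr /= /f1 /f2.
  rewrite exchange_big [X in n1 * X]exchange_big /=.
  have E1 : 2 ^ c * \sum_(a < n1) \sum_(S : {set G}) (~~ mms_fair c (u1 a) S : nat) <= n1 * 2 ^ #|G|.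
    rewrite big_distrr /= -[n1 in n1 * _]card_ord -sum_nat_const.
    by apply: leq_sum => a _; apply: agent_bound.
  have E2 : 2 ^ c * \sum_(a < n2) \sum_(S : {set G}) (~~ mms_fair c (u2 a) (~: S) : nat) <= n2 * 2 ^ #|G|.
    rewrite big_distrr /= -[n2 in n2 * _]card_ord -sum_nat_const.
    by apply: leq_sum => a _; apply: agent_boundC.
  have Ecard : #|@predT {set G}| = 2 ^ #|G|.
    by have := card_powerset [set: G]; rewrite powersetT !cardsT.
  rewrite Ecard; move: E1 E2.
  set X1 := \sum_(a < n1) _; set X2 := \sum_(a < n2) _; set Q := 2 ^ #|G|.
  have Q0 : 0 < Q by rewrite expn_gt0.
  nia.
exists S.
have [k Ec] : exists k, c = k.+1 by exists c.-1; lia.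
have F1 := @card_fair n1 (fun a => mms_fair c (u1 a) S).
have F2 := @card_fair n2 (fun a => mms_fair c (u2 a) (~: S)).
rewrite -/(f1 S) in F1; rewrite -/(f2 S) in F2.
move: HS F1 F2; rewrite Ec expnS /=.
set P := 2 ^ k; set A1 := #|_|; set A2 := #|_|.
have P0 : 0 < P by rewrite expn_gt0.
move=> HS F1 F2.
have H1 : P * f1 S <= n1.
  rewrite -(leq_pmul2r n20); nia.
have H2 : P * f2 S <= n2.
  rewrite -(leq_pmul2r n10); nia.
split; nia.
Qed.
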